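(* Let $\mathbf f$ be the Fibonacci word and $\mathbf g=0\mathbf f$. Then for every nonempty prefix $u$ of $\mathbf f$, the set $\mathbf f|_u$ is an IP$^*$-set (hence a central$^*$ set), and the sets $\mathbf g|_{0u}$ and $\mathbf g|_{1u}$ are both IP-sets (equivalently, central sets).
   Context: The Fibonacci word $\mathbf f=0100101001001\cdots\in\{0,1\}^{\mathbb N}$ is the fixed point of the substitution $0\mapsto01$, $1\mapsto0$. $\mathbb N=\{0,1,2,\dots\}$; for an infinite word $\omega=\omega_0\omega_1\cdots$ and a nonempty finite word $u$, $\omega|_u=\{n:\omega_n\cdots\omega_{n+|u|-1}=u\}$. A set $A\subseteq\mathbb N$ is an IP-set if there is a sequence $x_0<x_1<\cdots$ in $\mathbb N$ with $\sum_{n\in F}x_n\in A$ for all nonempty finite $F\subseteq\mathbb N$, and an IP$^*$-set if it meets every IP-set. $\beta\mathbb N$ is the set of ultrafilters on $\mathbb N$ with addition $A\in p+q$ iff $\{n:A-n\in p\}\in q$ ($A-n=\{m:m+n\in A\}$); a minimal idempotent is a non-principal $p$ with $p+p=p$ in the smallest two-sided ideal of $\beta\mathbb N$; a set is central if it belongs to some minimal idempotent and central$^*$ if it belongs to every minimal idempotent. *)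

(* Defs.v *)
From mathcomp Require Import all_boot.
Set Implicit Arguments. Unset Strict Implicit. Unset Printing Implicit Defensive.

(* Infinite words over {0,1}, letters coded as naturals 0 and 1. *)
Definition word := nat -> nat.

Definition fib_sub_letter (a : nat) : seq nat :=
  if a == 0 then [:: 0; 1] else [:: 0].
Definition fib_sub (w : seq nat) : seq nat := flatten (map fib_sub_letter w).

(* The Fibonacci word: its fixed point, f_n = (n-th letter of sigma^(n+1)(0)),
   which is well defined since |sigma^(n+1)(0)| = F_(n+3) > n and the words
   sigma^k(0) are prefixes of one another. *)
Definition fib_word : word := fun n => nth 0 (iter n.+1 fib_sub [:: 0]) n.

Definition g_word : word := fun n => if n is m.+1 then fib_word m else 0.

Definition occ (omega : word) (u : seq nat) : nat -> Prop :=
  fun n => forall i, i < size u -> omega (n + i) = nth 0 u i.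

Definition word_prefix (omega : word) (k : nat) : seq nat := mkseq omega k.

Definition IPset (A : nat -> Prop) : Prop :=
  exists x : nat -> nat, (forall n, x n < x n.+1) /\
    forall F : seq nat, uniq F -> F != [::] -> A (\sum_(i <- F) x i).

Definition IPstar (A : nat -> Prop) : Prop :=
  forall B : nat -> Prop, IPset B -> exists n, A n /\ B n.

Definition ultrafilter (p : (nat -> Prop) -> Prop) : Prop :=
  [/\ p (fun _ => True),
      ~ p (fun _ => False),
      (forall A B : nat -> Prop, (forall n, A n -> B n) -> p A -> p B),
      (forall A B : nat -> Prop, p A -> p B -> p (fun n => A n /\ B n)) &
      (forall A : nat -> Prop, p A \/ p (fun n => ~ A n))].

Definition nonprincipal (p : (nat -> Prop) -> Prop) : Prop :=
  forall m, ~ p (fun n => n = m).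

Definition uf_add (p q : (nat -> Prop) -> Prop) : (nat -> Prop) -> Prop :=
  fun A => q (fun n => p (fun m => A (m + n))).

Definition uf_eq (p q : (nat -> Prop) -> Prop) : Prop :=
  forall A, p A <-> q A.

Definition uf_ideal (I : ((nat -> Prop) -> Prop) -> Prop) : Prop :=
  [/\ (exists p, I p),
      (forall p, I p -> ultrafilter p),
      (forall p p', I p -> uf_eq p p' -> I p') &
      (forall p q, I p -> ultrafilter q -> I (uf_add p q) /\ I (uf_add q p))].

(* p lies in the smallest two-sided ideal K(beta N) (= the intersection of
   all two-sided ideals, since the smallest ideal is contained in all of them) *)
Definition in_smallest_ideal (p : (nat -> Prop) -> Prop) : Prop :=
  ultrafilter p /\ forall I, uf_ideal I -> I p.

Definition minimal_idempotent (p : (nat -> Prop) -> Prop) : Prop :=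
  [/\ ultrafilter p, nonprincipal p, uf_eq (uf_add p p) p & in_smallest_ideal p].

Definition central (A : nat -> Prop) : Prop :=
  exists p, minimal_idempotent p /\ p A.

Definition central_star (A : nat -> Prop) : Prop :=
  forall p, minimal_idempotent p -> p A.

(* Main.v *)
From Stdlib Require Import List Classical ClassicalEpsilon Reals Lra Lia ZArith.
From mathcomp Require Import all_boot zify boolp classical_sets.
Require Import Defs.
Set Implicit Arguments. Unset Strict Implicit. Unset Printing Implicit Defensive.


Definition sset := nat -> Prop.
Definition ufT := sset -> Prop.
Definition SU := ufT -> Prop.

Section UFbasic.

Lemma ufT_ p : ultrafilter p -> p (fun _ => True).
Proof. by case. Qed.
Lemma ufF p : ultrafilter p -> ~ p (fun _ => False).
Proof. by case. Qed.
Lemma ufM p (A B : sset) : ultrafilter p -> (forall n, A n -> B n) -> p A -> p B.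
Proof. by case=> _ _ H _ _; apply: H. Qed.
Lemma ufI p (A B : sset) : ultrafilter p -> p A -> p B -> p (fun n => A n /\ B n).
Proof. by case=> _ _ _ H _; apply: H. Qed.
Lemma ufC p (A : sset) : ultrafilter p -> p A \/ p (fun n => ~ A n).
Proof. by case=> _ _ _ _ H; apply: H. Qed.
Lemma ufN p (A : sset) : ultrafilter p -> ~ p A -> p (fun n => ~ A n).
Proof. by move=> U nA; case: (ufC A U). Qed.
Lemma ufNN p (A : sset) : ultrafilter p -> p A -> ~ p (fun n => ~ A n).
Proof.
move=> U pA pnA; apply: (ufF U); apply: (ufM U _ (ufI U pA pnA)) => n [].
by move=> a /(_ a).
Qed.
Lemma ufne p (A : sset) : ultrafilter p -> p A -> exists n, A n.
Proof.
move=> U pA; apply: NNPP => H; apply: (ufF U); apply: (ufM U _ pA) => n An.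
by apply: H; exists n.
Qed.

Lemma uf_ext p q : ultrafilter p -> ultrafilter q -> (forall A, p A -> q A) -> p = q.
Proof.
move=> Up Uq H; apply: funext => A; apply: propext; split; first by apply: H.
move=> qA; apply: NNPP => npA; have := H _ (ufN Up npA).
by apply: ufNN.
Qed.

Definition hp (p q : ufT) : ufT := fun A => p (fun x => q (fun m => A (m + x))).

Lemma hp_uf p q : ultrafilter p -> ultrafilter q -> ultrafilter (hp p q).
Proof.
move=> Up Uq; split.
- by apply: (ufM Up _ (ufT_ Up)) => _ _; exact: (ufT_ Uq).
- move=> H; apply: (ufF Up); apply: (ufM Up _ H) => x; exact: (ufF Uq).
- move=> A B AB; rewrite /hp; apply: (ufM Up) => // x; apply: (ufM Uq) => // m; apply: AB.
- move=> A B HA HB; apply: (ufM Up _ (ufI Up HA HB)) => x [h1 h2].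
  exact: (ufI Uq).
- move=> A; case: (ufC (fun x => q (fun m => A (m + x))) Up) => H; [left|right] => //.
  apply: (ufM Up _ H) => x /(ufN Uq); done.
Qed.

Lemma hp_assoc p q r : hp (hp p q) r = hp p (hp q r).
Proof.
apply: funext => A; rewrite /hp; apply: propext.
suff -> : (fun x => q (fun m => r (fun m0 => A (m0 + (m + x))))) =
          (fun x => q (fun m => r (fun m0 => A (m0 + m + x)))) by [].
apply: funext => x; congr q; apply: funext => m; congr r; apply: funext => m0.
by rewrite addnA.
Qed.

Definition princ (n : nat) : ufT := fun A => A n.
Lemma princ_uf n : ultrafilter (princ n).
Proof.
split => //; rewrite /princ.
- by move=> A B H; apply: H.
- by move=> A; case: (Classical_Prop.classic (A n)) => H; [left|right].
Qed.

Lemma hp_princ n q A : hp (princ n) q A = q (fun m => A (m + n)).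
Proof. by []. Qed.

End UFbasic.

Definition FIP (F : sset -> Prop) : Prop :=
  forall l : list sset, (forall A, In A l -> F A) -> exists n, forall A, In A l -> A n.

Lemma uf_list p (l : list sset) : ultrafilter p -> (forall A, In A l -> p A) ->
  p (fun n => forall A, In A l -> A n).
Proof.
move=> U; elim: l => [|B l IH] H /=.
  by apply: (ufM U _ (ufT_ U)) => n _ A [].
have := ufI U (H B (or_introl erefl)) (IH (fun A hA => H A (or_intror hA))).
apply: ufM => // n [h1 h2] A [<-|hA] //; exact: h2.
Qed.

Lemma uf_list_ne p (l : list sset) : ultrafilter p -> (forall A, In A l -> p A) ->
  exists n, forall A, In A l -> A n.
Proof. by move=> U H; apply: (ufne U); apply: uf_list. Qed.
Lemma zornP (T : Type) (R : T -> T -> Prop) :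
  (forall t, R t t) -> (forall r s t, R r s -> R s t -> R r t) ->
  (forall s t, R s t -> R t s -> s = t) ->
  (forall A : T -> Prop, (forall s t, A s -> A t -> R s t \/ R t s) ->
      exists t, forall s, A s -> R s t) ->
  exists t, forall s, R t s -> s = t.
Proof.
move=> Rr Rt Ra Rc.
have := @Zorn T (fun a b => `[< R a b >]).
case.
- by move=> t; apply/asboolP.
- by move=> r s t /asboolP H1 /asboolP H2; apply/asboolP; apply: Rt H1 H2.
- by move=> s t /asboolP H1 /asboolP H2; apply: Ra.
- move=> A HA; case: (Rc A).
    move=> s t As At; case: (HA s t As At) => /asboolP H; [left|right]; exact H.
  by move=> t Ht; exists t => s As; apply/asboolP; apply: Ht.
- by move=> t Ht; exists t => s Rs; apply: Ht; apply/asboolP.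
Qed.


Lemma FIP_add (M : sset -> Prop) (B : sset) : FIP M ->
  (forall l : list sset, (forall A, In A l -> M A) -> exists n, (forall A, In A l -> A n) /\ B n) ->
  FIP (fun C => M C \/ C = B).
Proof.
move=> FM HB l Hl.
have [l' [Hl' Hll']] : exists l', (forall A, In A l' -> M A) /\ forall A, In A l -> In A l' \/ A = B.
  elim: l Hl => [|C l IH] Hl; first by exists nil.
  case: IH => [A hA|l' [h1 h2]]; first by apply: Hl; right.
  case: (Hl C (or_introl erefl)) => HC.
    exists (C :: l'); split; first by move=> A [<-|hA] //; apply: h1.
    by move=> A [<-|hA]; [left; left|case: (h2 A hA) => ?; [left; right|right]].
  exists l'; split => // A [<-|hA]; first by right.
  exact: h2.
case: (HB l' Hl') => n [h1 h2]; exists n => A /Hll' [/h1 //|->//].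
Qed.

Lemma uf_lemma (F : sset -> Prop) : FIP F -> exists r, ultrafilter r /\ forall A, F A -> r A.
Proof.
move=> FF.
pose T := {G : sset -> Prop | (forall A, F A -> G A) /\ FIP G}.
pose R := fun a b : T => forall A, sval a A -> sval b A.
have [t Ht] : exists t : T, forall s, R t s -> s = t.
  apply: zornP.
  - by move=> t A.
  - by move=> r s t h1 h2 A /h1 /h2.
  - move=> [a Ha] [b Hb]; rewrite /R /= => h1 h2.
    have E : a = b by apply: funext => A; apply: propext; split; [apply: h1|apply: h2].
    subst b; congr exist; apply: proof_irrelevance.
  - move=> A HA.
    pose G0 := fun B => F B \/ exists a, A a /\ sval a B.
    have FG : FIP G0.
      move=> l Hl.
      have [G1 [hG1 [hG2 hG3]]] : exists G1 : sset -> Prop, FIP G1 /\ (forall B, In B l -> G1 B) /\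
          ((forall B, G1 B -> F B) \/ exists a, A a /\ G1 = sval a).
        elim: l Hl => [|C l IH] Hl; first by exists F; split=> //; split => //; left.
        case: IH => [B hB|G1 [f1 [f2 f3]]]; first by apply: Hl; right.
        case: (Hl C (or_introl erefl)) => [FC|[a [Aa aC]]].
        + case: f3 => [f3|[a [Aa EG]]]; last subst G1.
            exists F; split => //; split; last by left.
            by move=> B [<-|/f2/f3].
          exists (sval a); split; first by case: (svalP a).
          split; last by right; exists a.
          by move=> B [<-|/f2 //]; case: (svalP a) => h _; apply: h.
        + case: f3 => [f3|[b [Ab EG]]]; last subst G1.
            exists (sval a); split; first by case: (svalP a).
            split; last by right; exists a.
            by move=> B [<-//|/f2/f3]; case: (svalP a) => h _; apply: h.
          case: (HA a b Aa Ab) => Hab.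
            exists (sval b); split; first by case: (svalP b).
            split; last by right; exists b.
            by move=> B [<-|/f2 //]; apply: Hab.
          exists (sval a); split; first by case: (svalP a).
          split; last by right; exists a.
          by move=> B [<-//|/f2 ]; apply: Hab.
      exact: hG1.
    have HG0 : (forall A, F A -> G0 A) /\ FIP G0 by split => //; move=> B hB; left.
    exists (exist _ G0 HG0) => s As B /= hB; right; exists s; done.
case: t Ht => M [FM FIM] Ht.
have maxM : forall B, (forall l : list sset, (forall A, In A l -> M A) ->
     exists n, (forall A, In A l -> A n) /\ B n) -> M B.
  move=> B HB.
  have H2 : (forall A, F A -> (fun C => M C \/ C = B) A) /\ FIP (fun C => M C \/ C = B).
    by split; [move=> A /FM; left | apply: FIP_add].
  have := Ht (exist _ _ H2); rewrite /R /= => /(_ (fun A h => or_introl h)) E.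
  have E' := f_equal (@sval _ _) E; simpl in E'.
  move: (or_intror (M B) (erefl B)); change ((fun C => M C \/ C = B) B -> M B).
  by rewrite E'.
exists M; split => //; split.
- apply: maxM => l hl; case: (FIM l hl) => n hn; by exists n.
- by move=> HF; case: (FIM (cons (fun _ => False) nil)) => [A [<-|[]]//|n /(_ _ (or_introl erefl))].
- move=> A B AB MA; apply: maxM => l hl; case: (FIM (A :: l)) => [C [<-//|/hl//]|n hn].
  by exists n; split; [move=> C hC; apply: hn; right | apply: AB; apply: hn; left].
- move=> A B MA MB; apply: maxM => l hl; case: (FIM (A :: B :: l)) => [C [<-//|[<-//|/hl//]]|n hn].
  exists n; split; first by move=> C hC; apply: hn; right; right.
  by split; apply: hn; [left|right;left].
- move=> A; case: (Classical_Prop.classic (forall l : list sset, (forall C, In C l -> M C) ->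
     exists n, (forall C, In C l -> C n) /\ A n)) => H; first by left; apply: maxM.
  right; apply: maxM => l hl.
  have [l1 Hl1] : exists l1 : list sset, ~ ((forall C, In C l1 -> M C) ->
     exists n, (forall C, In C l1 -> C n) /\ A n).
    by apply: not_all_ex_not.
  have [h1 h2] := imply_to_and _ _ Hl1.
  case: (FIM (l ++ l1)) => [C HC|n hn]; first by case: (in_app_or _ _ _ HC) => [/hl|/h1].
  exists n; split; first by move=> C hC; apply: hn; apply: in_or_app; left.
  move=> An; apply: h2; exists n; split => // C hC; apply: hn; apply: in_or_app; right; done.
Qed.


Definition closed (C : SU) : Prop :=
  (forall p, C p -> ultrafilter p) /\
  forall r, ultrafilter r -> (forall A, (forall q, C q -> q A) -> r A) -> C r.

Lemma compact (I : Type) (Cs : I -> SU) : (forall i, closed (Cs i)) ->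
  (forall l : list I, exists p, ultrafilter p /\ forall i, In i l -> Cs i p) ->
  exists p, ultrafilter p /\ forall i, Cs i p.
Proof.
move=> Cc FI.
pose F := fun A : sset => exists i, forall q, Cs i q -> q A.
have FF : FIP F.
  move=> l Hl.
  have [li Hli] : exists li : list I, forall A, In A l -> exists i, In i li /\ forall q, Cs i q -> q A.
    elim: l Hl => [|B l IH] Hl; first by exists nil.
    case: IH => [A hA|li Hli]; first by apply: Hl; right.
    case: (Hl B (or_introl erefl)) => i Hi.
    exists (i :: li) => A [<-|hA]; first by exists i; split => //; left.
    by case: (Hli A hA) => j [h1 h2]; exists j; split => //; right.
  case: (FI li) => p [Up Hp].
  apply: (uf_list_ne Up) => A /Hli [i [h1 h2]]; apply: h2; exact: Hp.
case: (uf_lemma FF) => r [Ur Hr].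
exists r; split => // i; case: (Cc i) => _ H; apply: H => // A hA; apply: Hr; by exists i.
Qed.

Lemma closed_all : closed (fun p => ultrafilter p).
Proof. by split. Qed.

Lemma closed_basic (Q : sset) : closed (fun p => ultrafilter p /\ p Q).
Proof.
split; first by move=> p [].
move=> r Ur H; split => //; apply: H => q []; done.
Qed.

Lemma closed_if (P : Prop) (C : SU) : closed C -> closed (fun p => ultrafilter p /\ (P -> C p)).
Proof.
move=> [C1 C2]; split; first by move=> p [].
move=> r Ur H; split => // HP; apply: C2 => // A hA; apply: H => q [Uq Hq]; apply: hA; exact: Hq.
Qed.

Lemma closed_ifb (P : Prop) (Q : sset) : closed (fun p => ultrafilter p /\ (P -> p Q)).
Proof.
split; first by move=> p [].
move=> r Ur H; split => // HP; apply: H => q [_ Hq]; exact: Hq.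
Qed.

Lemma closed_inter (X : SU) (G : SU -> Prop) : closed X -> (forall Y, G Y -> closed Y) ->
  closed (fun p => X p /\ forall Y, G Y -> Y p).
Proof.
move=> [X1 X2] HG; split; first by move=> p [/X1].
move=> r Ur H; split.
  by apply: X2 => // A hA; apply: H => q [/hA].
move=> Y GY; case: (HG Y GY) => _ Y2; apply: Y2 => // A hA; apply: H => q [_ hq]; apply: hA; exact: hq.
Qed.

Lemma closed_image (C : SU) x : closed C -> ultrafilter x ->
  closed (fun r => exists y, C y /\ r = hp y x).
Proof.
move=> [C1 C2] Ux; split; first by move=> p [y [/C1 Uy ->]]; apply: hp_uf.
move=> r Ur Hr.
pose Cs := fun o : option sset => match o with None => C
  | Some E => fun y => ultrafilter y /\ (r E -> hp y x E) end.
have [y [Uy Hy]] : exists y, ultrafilter y /\ forall o, Cs o y.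
  apply: compact.
    case=> [E|]; [exact: closed_ifb | by split].
  move=> l.
  have [l2 [h1 h2]] : exists l2 : list sset, (forall E, In E l2 -> r E) /\
      forall E, In (Some E) l -> r E -> In E l2.
    elim: l => [|o l [l2 [h1 h2]]]; first by exists nil.
    case: o => [E|]; last first.
      by exists l2; split => // E [//|]; apply: h2.
    case: (Classical_Prop.classic (r E)) => rE.
      exists (E :: l2); split; first by move=> B [<-|/h1].
      by move=> B [[<-]|/h2 hh rB]; [left|right; apply: hh].
    exists l2; split => // B [[<-]//|]; apply: h2.
  have rE0 := uf_list Ur h1.
  have [q [[z [Cz qE]] Hq]] : exists q, (exists y, C y /\ q = hp y x) /\
                 q (fun n => forall E, In E l2 -> E n).
    apply: NNPP => nH; apply: (ufNN Ur rE0); apply: Hr => q Hq.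
    have Uq : ultrafilter q by case: Hq => y [/C1 Uy ->]; exact: (hp_uf Uy Ux).
    by apply: (ufN Uq) => qq; apply: nH; exists q; split.
  subst q; exists z; split; first exact: C1.
  case=> [E|] Hin //=; split; first exact: C1.
  move=> rE; apply: (ufM (C1 _ Cz) _ Hq) => m; apply: (ufM Ux) => n; apply.
  exact: h2.
exists y; split; first exact: (Hy None).
apply: uf_ext => // [|A rA]; first exact: hp_uf.
by case: (Hy (Some A)) => _; apply.
Qed.

Lemma closed_fix (A : SU) x : closed A -> ultrafilter x ->
  closed (fun y => A y /\ hp y x = x).
Proof.
move=> [A1 A2] Ux; split; first by move=> p [/A1].
move=> r Ur Hr; split.
  by apply: A2 => // B hB; apply: Hr => q [/hB].
symmetry; apply: uf_ext => //; first exact: hp_uf.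
move=> E xE; apply: Hr => q [Aq Eq]; by rewrite -Eq in xE.
Qed.

Lemma chain_nonempty (X : SU) (G : SU -> Prop) : closed X -> (exists p, X p) ->
  (forall Y, G Y -> closed Y /\ (exists p, Y p) /\ forall p, Y p -> X p) ->
  (forall Y Z, G Y -> G Z -> (forall p, Y p -> Z p) \/ (forall p, Z p -> Y p)) ->
  exists p, X p /\ forall Y, G Y -> Y p.
Proof.
move=> cX neX HG tG.
pose Cs := fun o : option SU => match o with None => X
  | Some Y => fun p => ultrafilter p /\ (G Y -> Y p) end.
have [p [Up Hp]] : exists p, ultrafilter p /\ forall o, Cs o p.
  apply: compact.
    case=> [Y|]; last by [].
    split; first by move=> p [].
    move=> r Ur H; split => // GY; case: (HG Y GY) => [[_ Y2] _]; apply: Y2 => // A hA.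
    by apply: H => q [_ hq]; apply: hA; apply: hq.
  move=> l.
  have [Y0 [h1 h2]] : exists Y0, (Y0 = X \/ G Y0) /\
      forall Y, In (Some Y) l -> G Y -> forall p, Y0 p -> Y p.
    elim: l => [|o l [Y0 [h1 h2]]]; first by exists X; split => //; left.
    case: o => [Y|]; last by exists Y0; split => // Y [//|]; apply: h2.
    case: (Classical_Prop.classic (G Y)) => GY; last by exists Y0; split => // Z [[<-]//|]; apply: h2.
    case: h1 => [E|GY0].
      subst Y0; exists Y; split; first by right.
      move=> Z [[<-]//|hZ GZ p Yp]; apply: h2 => //; case: (HG Y GY) => _ [_]; apply; done.
    case: (tG Y Y0 GY GY0) => Hc.
      exists Y; split; first by right.
      by move=> Z [[<-]//|hZ GZ p Yp]; apply: h2 => //; apply: Hc.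
    exists Y0; split; first by right.
    by move=> Z [[<-] _|hZ GZ]; [apply: Hc | apply: h2].
  have [p Y0p] : exists p, Y0 p.
    by case: h1 => [->//|/HG [_ []]].
  have Xp : X p by case: h1 => [E|/HG [_ [_ H]]]; [rewrite -E | apply: H].
  exists p; split; first by case: cX => H _; apply: H.
  case=> [Y|] /=; last by [].
  move=> hY; split; first by case: cX => H _; apply: H.
  by move=> GY; apply: h2.
exists p; split; first exact: (Hp None).
by move=> Y GY; case: (Hp (Some Y)) => _; apply.
Qed.

Lemma min_exists (P : SU -> Prop) (X : SU) : P X ->
  (forall G : SU -> Prop, (forall Y, G Y -> P Y /\ forall p, Y p -> X p) ->
     (forall Y Z, G Y -> G Z -> (forall p, Y p -> Z p) \/ (forall p, Z p -> Y p)) ->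
     P (fun p => X p /\ forall Y, G Y -> Y p)) ->
  exists Y, P Y /\ (forall p, Y p -> X p) /\ forall Z, P Z -> (forall p, Z p -> Y p) -> Z = Y.
Proof.
move=> PX HC.
pose T := {Y : SU | P Y /\ forall p, Y p -> X p}.
pose R := fun a b : T => forall p, sval b p -> sval a p.
have [t Ht] : exists t : T, forall s, R t s -> s = t.
  apply: zornP.
  - by move=> t A.
  - by move=> r s t h1 h2 A /h2 /h1.
  - move=> [a Ha] [b Hb]; rewrite /R /= => h1 h2.
    have E : a = b by apply: funext => A; apply: propext; split; [apply: h2|apply: h1].
    subst b; congr exist; apply: proof_irrelevance.
  - move=> A HA.
    pose G := fun Y => exists a, A a /\ sval a = Y.
    have H1 : P (fun p => X p /\ forall Y, G Y -> Y p) /\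
              forall p, (fun p => X p /\ forall Y, G Y -> Y p) p -> X p.
      split; last by move=> p [].
      apply: HC.
        by move=> Y [a [_ <-]]; case: (svalP a).
      move=> Y Z [a [Aa <-]] [b [Ab <-]]; case: (HA a b Aa Ab) => H; [right|left]; exact: H.
    exists (@exist SU (fun Y => P Y /\ forall p, Y p -> X p) _ H1) => s As p /= [_]; apply; by exists s.
case: t Ht => Y [PY XY] Ht; exists Y; split => //; split => // Z PZ ZY.
have H2 : P Z /\ forall p, Z p -> X p by split => // p /ZY /XY.
have := Ht (@exist SU (fun Y => P Y /\ forall p, Y p -> X p) Z H2); rewrite /R /= => /(_ ZY) E.
by have := f_equal (@sval _ _) E.
Qed.


Definition leftideal (Y : SU) := forall q p, ultrafilter q -> Y p -> Y (hp q p).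
Definition semigrp (Y : SU) := forall p q, Y p -> Y q -> Y (hp p q).

Lemma min_left_ideal : exists L, closed L /\ (exists p, L p) /\ leftideal L /\
  forall Z, closed Z -> (exists p, Z p) -> leftideal Z -> (forall p, Z p -> L p) -> Z = L.
Proof.
pose P := fun Y => closed Y /\ (exists p, Y p) /\ leftideal Y.
have H1 : P (fun p => ultrafilter p).
  split; first exact: closed_all.
  split; first by exists (princ 0); apply: princ_uf.
  by move=> q p Uq Up; apply: hp_uf.
have H2 : forall G : SU -> Prop, (forall Y, G Y -> P Y /\ forall p, Y p -> ultrafilter p) ->
     (forall Y Z, G Y -> G Z -> (forall p, Y p -> Z p) \/ (forall p, Z p -> Y p)) ->
     P (fun p => ultrafilter p /\ forall Y, G Y -> Y p).
  move=> G HG tG; split.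
    apply: closed_inter; first exact: closed_all.
    by move=> Y /HG [[]].
  split.
    apply: (chain_nonempty closed_all).
    - by exists (princ 0); apply: princ_uf.
    - by move=> Y /HG [[cY [neY _]] XY].
    - exact: tG.
  move=> q p Uq [Up HY]; split; first exact: hp_uf.
  by move=> Y GY; case: (HG Y GY) => [[_ [_ liY]] _]; apply: liY => //; apply: HY.
have [L [[cL [neL liL]] [_ HL]]] := min_exists H1 H2.
exists L; split => //; split => //; split => // Z cZ neZ liZ ZL.
by apply: HL.
Qed.

Lemma ellis (X0 : SU) : closed X0 -> (exists p, X0 p) -> semigrp X0 ->
  exists e, X0 e /\ hp e e = e.
Proof.
move=> cX neX sX.
pose P := fun Y => closed Y /\ (exists p, Y p) /\ semigrp Y.
have H1 : P X0 by split => //; split.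
have H2 : forall G : SU -> Prop, (forall Y, G Y -> P Y /\ forall p, Y p -> X0 p) ->
     (forall Y Z, G Y -> G Z -> (forall p, Y p -> Z p) \/ (forall p, Z p -> Y p)) ->
     P (fun p => X0 p /\ forall Y, G Y -> Y p).
  move=> G HG tG; split.
    by apply: closed_inter => // Y /HG [[]].
  split.
    by apply: chain_nonempty => // Y /HG [[cY [neY _]] XY].
  move=> p q [Xp Hp] [Xq Hq]; split; first exact: (sX).
  by move=> Y GY; case: (HG Y GY) => [[_ [_ sY]] _]; apply: sY; [apply: Hp|apply: Hq].
have [A [[cA [[x Ax] sA]] [AX HA]]] := min_exists H1 H2.
have UA : forall p, A p -> ultrafilter p by case: cA.
have Ux := UA _ Ax.
have EZ : (fun r => exists y, A y /\ r = hp y x) = A.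
  apply: HA.
    split; first exact: closed_image.
    split; first by exists (hp x x); exists x.
    move=> p q [y [Ay ->]] [z [Az ->]]; exists (hp (hp y x) z); split.
      by apply: (sA) => //; apply: (sA).
    exact: (esym (hp_assoc _ _ _)).
  by move=> p [y [Ay ->]]; apply: (sA).
have EB : (fun y => A y /\ hp y x = x) = A.
  apply: HA.
    split; first exact: closed_fix.
    split.
      have := Ax; rewrite -{1}EZ.
      by case=> y [Ay E]; exists y; split.
    move=> p q [Ap Ep] [Aq Eq]; split; first exact: (sA).
    by rewrite hp_assoc Eq Ep.
  by move=> p [].
exists x; split; first exact: AX.
have := Ax; rewrite -{1}EB.
by case.
Qed.

Lemma uf_finite_cover q (b : nat) (P : nat -> sset) : ultrafilter q ->
  (forall n, exists j, j <= b /\ P j n) -> exists j, j <= b /\ q (P j).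
Proof.
move=> Uq H; apply: NNPP => nH.
have K : forall c, c <= b -> q (fun n => forall j, j <= c -> ~ P j n).
  elim=> [|c IH] hc.
    apply: (ufM Uq _ (ufN Uq (fun h => nH (ex_intro _ 0 (conj (leq0n b) h))))).
    by move=> n Hn j; rewrite leqn0 => /eqP ->.
  have h1 := IH (ltnW hc).
  have h2 := ufN Uq (fun h => nH (ex_intro _ c.+1 (conj hc h))).
  apply: (ufM Uq _ (ufI Uq h1 h2)) => n [g1 g2] j; rewrite leq_eqVlt ltnS.
  by case/orP => [/eqP ->//|]; apply: g1.
case: (ufne Uq (K b (leqnn b))) => n Hn.
case: (H n) => j [jb Pj]; exact: (Hn j jb Pj).
Qed.

Theorem central_family (D : nat -> sset) :
  (forall t n, D t.+1 n -> D t n) ->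
  (forall t m n, D t.+1 m -> D t.+1 n -> D t (m + n)) ->
  (forall t, exists b, forall n, exists j, j <= b /\ D t (n + j)) ->
  ~ D 0 0 ->
  exists p, minimal_idempotent p /\ forall t, p (D t).
Proof.
move=> Ddec Dadd Dsyn D00.
have [L [cL [[q0 Lq0] [liL HL]]]] := min_left_ideal.
have UL : forall p, L p -> ultrafilter p by case: cL.
have Dmono : forall t t' n, t <= t' -> D t' n -> D t n.
  move=> t t' n; elim: t' => [|t' IH]; first by rewrite leqn0 => /eqP ->.
  rewrite leq_eqVlt ltnS => /orP [/eqP ->//|/IH h] /Ddec; exact: h.
pose X0 := fun p => L p /\ forall t, p (D t).
have cX0 : closed X0.
  split; first by move=> p [/UL].
  move=> r Ur Hr; split.
    case: cL => _; apply => // A hA; apply: Hr => q [Lq _]; exact: hA.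
  by move=> t; apply: Hr => q [_]; apply.
have neX0 : exists p, X0 p.
  pose G := fun Y : SU => exists t, Y = fun p => L p /\ p (D t).
  have [p [Lp Hp]] : exists p, L p /\ forall Y, G Y -> Y p.
    apply: chain_nonempty => //; first by exists q0.
      move=> Y [t ->]; split.
        split; first by move=> p [/UL].
        move=> r Ur Hr; split; last by apply: Hr => q [].
        case: cL => _; apply => // A hA; apply: Hr => q [Lq _]; exact: hA.
      split; last by move=> p [].
      case: (Dsyn t) => b Hb.
      have Uq0 := UL _ Lq0.
      case: (@uf_finite_cover q0 b (fun j n => D t (n + j)) Uq0 Hb) => j [_ Hj].
      exists (hp (princ j) q0); split; first by apply: (liL) => //; apply: princ_uf.
      exact: Hj.
    move=> Y Z [t ->] [t' ->].
    case: (leqP t t') => h; [right|left] => p [Lp Dp]; split => //.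
      by apply: (ufM (UL _ Lp) _ Dp) => n; apply: Dmono.
    by apply: (ufM (UL _ Lp) _ Dp) => n; apply: Dmono; apply: ltnW.
  exists p; split => // t.
  by case: (Hp (fun p => L p /\ p (D t))) => //; exists t.
have sX0 : semigrp X0.
  move=> p q [Lp Dp] [Lq Dq]; split; first by apply: (liL) => //; apply: UL.
  move=> t; apply: (ufM (UL _ Lp) _ (Dp t.+1)) => x Dx.
  by apply: (ufM (UL _ Lq) _ (Dq t.+1)) => m Dm; apply: Dadd.
have [e [[Le De] Ee]] := ellis cX0 neX0 sX0.
have Ue := UL _ Le.
exists e; split => //; split => //.
- move=> m em.
  have Ep : e = princ m.
    apply: uf_ext => //; first exact: princ_uf.
    move=> A eA; case: (ufne Ue (ufI Ue eA em)) => n [An nm]; rewrite /princ -nm; exact: An.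
  have E2 : hp (princ m) (princ m) = princ (m + m) by [].
  have mm : m + m = m.
    have := em; rewrite -{1}Ee Ep E2; done.
  have m0 : m = 0 by apply/eqP; rewrite -(eqn_add2l m) addn0 mm.
  subst m; apply: D00; have := De 0; rewrite Ep; done.
- by have E : uf_add e e = e := Ee; rewrite /uf_eq E.
- split => // I [[q0' Iq0] IU Ieq Iabs].
  have Uq0 := IU _ Iq0.
  pose w := hp q0' e.
  have Iw : I w by case: (Iabs q0' e Iq0 Ue).
  have Lw : L w by apply: (liL).
  have EZ : (fun r => exists y, ultrafilter y /\ r = hp y w) = L.
    apply: HL.
    - exact: closed_image closed_all (UL _ Lw).
    - by exists (hp q0' w); exists q0'.
    - move=> q p Uq [y [Uy ->]]; exists (hp q y); split; first exact: hp_uf.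
      by rewrite hp_assoc.
    - by move=> p [y [Uy ->]]; apply: (liL).
  have := Le; rewrite -{1}EZ.
  case=> y [Uy ->].
  by case: (Iabs w y Iw Uy).
Qed.


Lemma nonpr_cofinite p b : ultrafilter p -> nonprincipal p -> p (fun n => b < n).
Proof.
move=> U np; apply: NNPP => H.
have K : forall c, p (fun n => n <= c) -> exists m, p (fun n => n = m).
  elim=> [|c IH] h.
    by exists 0; apply: (ufM U _ h) => n; rewrite leqn0 => /eqP.
  case: (Classical_Prop.classic (p (fun n => n = c.+1))) => h1; first by exists c.+1.
  apply: IH; apply: (ufM U _ (ufI U h (ufN U h1))) => n [].
  by rewrite leq_eqVlt ltnS => /orP [/eqP|].
have h0 : p (fun n => n <= b).
  by apply: (ufM U _ (ufN U H)) => n hn; rewrite leqNgt; apply/negP.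
have [m Hm] := K b h0.
exact: (np m).
Qed.

Lemma bounded_forall p (S : nat) (Q : nat -> Prop) (P : nat -> sset) : ultrafilter p ->
  (forall s, s <= S -> Q s -> p (P s)) -> p (fun y => forall s, s <= S -> Q s -> P s y).
Proof.
move=> U; elim: S => [|S IH] H.
  case: (Classical_Prop.classic (Q 0)) => Q0.
    apply: (ufM U _ (H 0 (leqnn 0) Q0)) => y h s; rewrite leqn0 => /eqP -> //.
  apply: (ufM U _ (ufT_ U)) => y _ s; rewrite leqn0 => /eqP -> //.
have h1 := IH (fun s hs => H s (leqW hs)).
case: (Classical_Prop.classic (Q S.+1)) => QS.
  apply: (ufM U _ (ufI U h1 (H S.+1 (leqnn _) QS))) => y [g1 g2] s.
  by rewrite leq_eqVlt ltnS => /orP [/eqP ->//|]; apply: g1.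
apply: (ufM U _ h1) => y g1 s.
by rewrite leq_eqVlt ltnS => /orP [/eqP ->//|]; apply: g1.
Qed.

Lemma sum_sub_le (G : list nat) n (f : nat -> nat) : uniq G -> all (fun i => i < n) G ->
  \sum_(i <- G) f i <= \sum_(i <- iota 0 n) f i.
Proof.
move=> uG aG.
have := @uniq_sub_le_big nat addn leq leqnn (fun x y => leq_addr y x) 0 _ G (iota 0 n) xpredT f uG (iota_uniq 0 n).
apply.
by move=> i iG; rewrite mem_iota add0n; move/allP: aG; apply.
Qed.

Section GG.
Variables (p : ufT) (A : sset).
Hypotheses (Up : ultrafilter p) (np : nonprincipal p) (ip : hp p p = p) (pA : p A).

Let As := fun x => A x /\ p (fun m => A (m + x)).

Let pAs : p As.
Proof.
apply: (ufI Up pA); have := pA; rewrite -{1}ip; done.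
Qed.

Let star x : As x -> p (fun y => As (y + x)).
Proof.
move=> [Ax px].
have h2 : p (fun y => p (fun m => A (m + y + x))).
  have := px; rewrite -{1}ip; done.
apply: (ufM Up _ (ufI Up px h2)) => y [g1 g2]; split => //.
by apply: (ufM Up _ g2) => m; rewrite addnA.
Qed.

Let S (l : list nat) := \sum_(i <- iota 0 (size l)) nth 0 l i.

Let B (l : list nat) : sset := fun y => As y /\ S l < y /\
  forall G : list nat, uniq G -> G <> nil -> all (fun i => i < size l) G ->
    As ((\sum_(i <- G) nth 0 l i) + y).

Let Inv (l : list nat) := forall G : list nat, uniq G -> G <> nil ->
  all (fun i => i < size l) G -> As (\sum_(i <- G) nth 0 l i).

Let pB l : Inv l -> p (B l).
Proof.
move=> Il.
pose Q := fun s => exists G : list nat, [/\ uniq G, G <> nil, all (fun i => i < size l) G &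
   \sum_(i <- G) nth 0 l i = s].
have h3 : p (fun y => forall s, s <= S l -> Q s -> As (s + y)).
  apply: bounded_forall => // s _ [G [g1 g2 g3 <-]].
  by apply: (ufM Up _ (star (Il G g1 g2 g3))) => y; rewrite addnC.
apply: (ufM Up _ (ufI Up pAs (ufI Up (nonpr_cofinite (S l) Up np) h3))).
move=> y [g1 [g2 g3]]; split => //; split => // G h1 h2 h3'.
apply: g3; last by exists G; split.
exact: sum_sub_le.
Qed.

Let pick (l : list nat) : nat := epsilon (inhabits 0) (B l).

Let Inv_step l : Inv l -> Inv (rcons l (pick l)).
Proof.
move=> Il.
have [y By] : exists y, B l y by apply: (ufne Up (pB Il)).
have Bp : B l (pick l) by apply: (epsilon_spec (inhabits 0) (B l)); exists y.
case: Bp => b1 [b2 b3].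
move=> G uG nG aG.
have nth_r : forall i, i < size l -> nth 0 (rcons l (pick l)) i = nth 0 l i.
  by move=> i hi; rewrite nth_rcons hi.
case: (boolP (size l \in G)) => hG.
  have uR : uniq (rem (size l) G) by apply: rem_uniq.
  have aR : all (fun i => i < size l) (rem (size l) G).
    apply/allP => i hi.
    have iG : i \in G by apply: (mem_rem hi).
    have := allP aG i iG; rewrite size_rcons ltnS leq_eqVlt => /orP [/eqP ei|//].
    by move: hi; rewrite ei (mem_rem_uniqF _ uG).
  have Hs : \sum_(i <- G) nth 0 (rcons l (pick l)) i = pick l + \sum_(i <- rem (size l) G) nth 0 l i.
    rewrite (big_rem _ hG) /= nth_rcons ltnn eqxx; congr (_ + _).
    by apply: eq_big_seq => i /(allP aR) hi; apply: nth_r.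
  rewrite Hs.
  case E : (rem (size l) G) => [|a r].
    by rewrite big_nil addn0.
  rewrite -E addnC; apply: b3 => //; first by rewrite E.
have aR : all (fun i => i < size l) G.
  apply/allP => i iG; have := allP aG i iG; rewrite size_rcons ltnS leq_eqVlt.
  by case/orP => [/eqP ei|//]; move: hG; rewrite -ei iG.
rewrite (@eq_big_seq _ _ _ _ _ _ (fun i => nth 0 l i)); last first.
  by move=> i /(allP aR) hi; apply: nth_r.
exact: Il.
Qed.

Let L := fix L (m : nat) : list nat := if m is m'.+1 then rcons (L m') (pick (L m')) else nil.

Let size_L m : size (L m) = m.
Proof. by elim: m => //= m IH; rewrite size_rcons IH. Qed.

Let L_S m : L m.+1 = rcons (L m) (pick (L m)).
Proof. by []. Qed.

Let Inv_L m : Inv (L m).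
Proof.
elim: m => [|m IH] /=.
  by move=> [|a G] _ // _ /andP [].
exact: Inv_step.
Qed.

Let x := fun i => nth 0 (L i.+1) i.

Let L_prefix m i : i < m -> nth 0 (L m) i = x i.
Proof.
elim: m => [|m IH] //= hi.
rewrite nth_rcons size_L; move: hi; rewrite ltnS leq_eqVlt => /orP [/eqP ->|hi].
  by rewrite ltnn eqxx /x /= nth_rcons size_L ltnn eqxx.
by rewrite hi IH.
Qed.

Lemma GG_IP : IPset A.
Proof.
exists x; split.
  move=> n.
  have h : x n.+1 = pick (L n.+1) by rewrite /x L_S nth_rcons size_L ltnn eqxx.
  have [y By] : exists y, B (L n.+1) y by exact: (ufne Up (@pB (L n.+1) (@Inv_L n.+1))).
  have Bp : B (L n.+1) (pick (L n.+1)) by apply: (epsilon_spec (inhabits 0) (B _)); exists y.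
  case: Bp => _ [b2 _]; rewrite h; apply: leq_ltn_trans b2.
  rewrite /S size_L.
  have := @sum_sub_le [:: n] n.+1 (fun i => nth 0 (L n.+1) i) isT.
  rewrite /= ltnSn /= big_cons big_nil addn0; apply.
  by rewrite /x.
move=> F uF nF.
pose n := (\max_(i <- F) i).+1.
have aF : all (fun i => i < size (L n)) F.
  apply/allP => i iF; rewrite size_L /n ltnS.
  by apply: leq_bigmax_seq.
have nF' : F <> [::] by apply/eqP.
have := @Inv_L n F uF nF' aF.
rewrite (@eq_big_seq _ _ _ _ _ _ x); first by case.
by move=> i iF; apply: L_prefix; move: (allP aF i iF); rewrite size_L.
Qed.

End GG.

Lemma IPstar_central_star (A : sset) : IPstar A -> central_star A.
Proof.
move=> HA p [Up np Ep [_ _]].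
case: (ufC A Up) => // h.
have ip : hp p p = p by apply: funext => B; apply: propext; apply: Ep.
have := GG_IP Up np ip h.
move=> /HA [n [An nAn]]; done.
Qed.

Lemma central_IP (A : sset) : central A -> IPset A.
Proof.
move=> [p [[Up np Ep _] pA]].
have ip : hp p p = p by apply: funext => B; apply: propext; apply: Ep.
exact: GG_IP Up np ip pA.
Qed.


Lemma no_sqrt5 a b : 0 < b -> a * a = 5 * (b * b) -> False.
Proof.
move=> b0 H.
have a0 : 0 < a by nia.
have := congr1 (logn 5) H.
rewrite lognM // lognM // ?muln_gt0 ?b0 // lognM // (logn_prime 5 (isT : prime 5)) eqxx !addnn.
by move/(congr1 odd); rewrite odd_double /= odd_double.
Qed.

Section R1s.
Local Open Scope R_scope.

Definition fl (x : R) : Z := (up x - 1)%Z.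

Lemma fl_spec x : IZR (fl x) <= x < IZR (fl x) + 1.
Proof.
rewrite /fl minus_IZR; have [h1 h2] := archimed x; lra.
Qed.

Lemma fl_unique x z : IZR z <= x < IZR z + 1 -> fl x = z.
Proof.
move=> [h1 h2]; rewrite /fl.
have : (z + 1)%Z = up x by apply: tech_up; rewrite plus_IZR; lra.
lia.
Qed.

Lemma fl_mono x y : x <= y -> (fl x <= fl y)%Z.
Proof.
move=> xy; have [h1 h2] := fl_spec x; have [h3 h4] := fl_spec y.
case: (Z.le_gt_cases (fl x) (fl y)) => // H.
have : (fl y + 1 <= fl x)%Z by lia.
move/IZR_le; rewrite plus_IZR; lra.
Qed.

Lemma fl_addZ x N : fl (x + IZR N) = (fl x + N)%Z.
Proof.
apply: fl_unique; rewrite plus_IZR; have := fl_spec x; lra.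
Qed.

Definition s5 := sqrt 5.
Lemma s5_sq : s5 * s5 = 5.
Proof. by rewrite /s5 sqrt_sqrt; lra. Qed.
Lemma s5_bnd : 2 < s5 < 3.
Proof.
have h := s5_sq; have h0 : 0 <= s5 by apply: sqrt_pos.
split; nra.
Qed.

Lemma s5_irr (p q : Z) : q <> 0%Z -> IZR p <> IZR q * s5.
Proof.
move=> q0 E.
have E2 : IZR (p * p) = IZR (5 * (q * q)).
  rewrite !mult_IZR E.
  have h := s5_sq.
  replace (IZR q * s5 * (IZR q * s5)) with (IZR q * IZR q * (s5 * s5)) by ring.
  rewrite h; ring.
have E3 := eq_IZR _ _ E2.
apply: (@no_sqrt5 (Z.abs_nat p) (Z.abs_nat q)).
  apply/ltP; lia.
apply/eqP; apply/(Nat.eqb_spec); apply: Nat2Z.inj.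
rewrite !Nat2Z.inj_mul !Zabs2Nat.id_abs.
have : (Z.abs p * Z.abs p = p * p)%Z by rewrite -Z.abs_mul; apply: Z.abs_eq; nia.
have : (Z.abs q * Z.abs q = q * q)%Z by rewrite -Z.abs_mul; apply: Z.abs_eq; nia.
lia.
Qed.

Definition beta := (3 - s5) / 2.

Lemma beta_bnd : 0 < beta < 1/2.
Proof. rewrite /beta; have := s5_bnd; lra. Qed.

Lemma beta_sq : beta * beta = 3 * beta - 1.
Proof.
rewrite /beta; have h := s5_sq.
replace ((3 - s5) / 2 * ((3 - s5) / 2)) with ((9 - 6 * s5 + s5 * s5) / 4) by field.
rewrite h; field.
Qed.

Lemma beta_irr (m : Z) (N : Z) : m <> 0%Z -> IZR m * beta <> IZR N.
Proof.
move=> m0 E.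
apply: (@s5_irr (3 * m - 2 * N) m m0).
rewrite minus_IZR !mult_IZR -E /beta; field.
Qed.

End R1s.

Section R2s.
Local Open Scope R_scope.

Definition A (n : nat) : Z := fl (INR n * beta).
Definition mw (n : nat) : nat := Z.to_nat (A n.+1 - A n).

Lemma INR_Z n : INR n = IZR (Z.of_nat n).
Proof. exact: INR_IZR_INZ. Qed.

Lemma A0 : A 0 = 0%Z.
Proof. apply: fl_unique; rewrite /= Rmult_0_l; lra. Qed.
Lemma A1 : A 1 = 0%Z.
Proof. apply: fl_unique; rewrite /= Rmult_1_l; have := beta_bnd; lra. Qed.
Lemma A2 : A 2 = 0%Z.
Proof. apply: fl_unique; rewrite /=; have := beta_bnd; lra. Qed.

Lemma INR_addn m n : INR (m + n)%N = INR m + INR n.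
Proof. by rewrite -plusE plus_INR. Qed.

Lemma A_step n : A n.+1 = A n \/ A n.+1 = (A n + 1)%Z.
Proof.
rewrite /A S_INR Rmult_plus_distr_r Rmult_1_l.
have [h1 h2] := fl_spec (INR n * beta); have := beta_bnd => hb.
case: (Rlt_le_dec (INR n * beta + beta) (IZR (fl (INR n * beta)) + 1)) => h.
  by left; apply: fl_unique; lra.
right; apply: fl_unique; rewrite plus_IZR; lra.
Qed.

Lemma mw01 n : mw n = 0%N \/ mw n = 1%N.
Proof. rewrite /mw; case: (A_step n) => ->; [left|right]; lia. Qed.

Lemma mwE n : Z.of_nat (mw n) = (A n.+1 - A n)%Z.
Proof. rewrite /mw; case: (A_step n) => ->; lia. Qed.

Lemma frac_pos j : (0 < j)%N -> IZR (A j) < INR j * beta.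
Proof.
move=> j0; have [h1 h2] := fl_spec (INR j * beta); rewrite /A.
case: h1 => // E; exfalso; apply: (@beta_irr (Z.of_nat j) (A j)).
  lia.
by rewrite -INR_Z.
Qed.

Lemma eps_exists K : exists eps, 0 < eps /\ eps <= 1/2 /\ forall j, (0 < j)%N -> (j <= K)%N ->
  eps <= INR j * beta - IZR (A j) /\ eps <= 1 - (INR j * beta - IZR (A j)).
Proof.
elim: K => [|K [e [e0 [e1 He]]]].
  exists (1/2); split; first lra; split; first lra.
  by move=> j j0 jK; exfalso; lia.
have f1 := frac_pos (ltn0Sn K); have [_ f2] := fl_spec (INR K.+1 * beta).
rewrite -/(A K.+1) in f2.
exists (Rmin e (Rmin (INR K.+1 * beta - IZR (A K.+1)) (1 - (INR K.+1 * beta - IZR (A K.+1))))).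
split; first by repeat apply: Rmin_pos; lra.
split; first by apply: Rle_trans (Rmin_l _ _) _.
move=> j j0; rewrite leq_eqVlt => /orP [/eqP ->|jK].
  split; apply: Rle_trans (Rmin_r _ _) _; [apply: Rmin_l|apply: Rmin_r].
have [g1 g2] := He j j0 jK.
split; apply: Rle_trans (Rmin_l _ _) _; lra.
Qed.

Lemma A_shift n j N d : (0 < j)%N -> INR n * beta = IZR N + d ->
  - (INR j * beta - IZR (A j)) < d < 1 - (INR j * beta - IZR (A j)) ->
  A (n + j) = (N + A j)%Z.
Proof.
move=> j0 E [h1 h2]; rewrite /A INR_addn Rmult_plus_distr_r E.
apply: fl_unique; rewrite plus_IZR; rewrite /A in h1 h2; lra.
Qed.

Lemma A_shift0p n N d : INR n * beta = IZR N + d -> 0 <= d < 1 -> A n = N.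
Proof. move=> E h; rewrite /A E; apply: fl_unique; lra. Qed.

Lemma A_shift0n n N d : INR n * beta = IZR N + d -> -1 <= d < 0 -> A n = (N - 1)%Z.
Proof. move=> E h; rewrite /A E; apply: fl_unique; rewrite minus_IZR; lra. Qed.

Lemma key_real (I a : Z) : IZR a < (IZR I + 1) * beta < IZR a + 1 ->
  fl ((IZR (2 * I - a) + 1) * beta) = (I - a)%Z /\
  fl ((IZR (2 * I - a) + 2) * beta) = (I - a)%Z /\
  ((IZR I + 2) * beta < IZR a + 1 -> fl ((IZR (2 * I - a) + 3) * beta) = (I - a + 1)%Z).
Proof.
move=> [h1 h2].
have hb := beta_bnd; have hb2 := beta_sq.
set t := (IZR I + 1) * beta - IZR a.
have t0 : 0 < t < 1 by rewrite /t; lra.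
have E1 : (IZR (2 * I - a) + 1) * beta = IZR (I - a) + (1 - beta) * (1 - t).
  rewrite /t !minus_IZR mult_IZR.
  replace ((2 * IZR I - IZR a + 1) * beta) with
    ((IZR I - IZR a) + (1 - beta) * (1 - ((IZR I + 1) * beta - IZR a)) + (IZR I + 1) * (3 * beta - 1 - beta * beta)) by ring.
  rewrite hb2; ring.
have P1 : 0 < (1 - beta) * (1 - t) by apply: Rmult_lt_0_compat; lra.
have P2 : (1 - beta) * (1 - t) < 1 - beta.
  have : (1 - beta) * t > 0 by apply: Rmult_lt_0_compat; lra.
  lra.
split.
  by apply: fl_unique; rewrite E1; split; lra.
split.
  apply: fl_unique.
  replace ((IZR (2 * I - a) + 2) * beta) with ((IZR (2 * I - a) + 1) * beta + beta) by ring.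
  rewrite E1; split; lra.
move=> h3.
have t1 : t < 1 - beta by rewrite /t; lra.
have P3 : (1 - beta) * t < beta.
  have : (1 - beta) * t <= (1 - beta) * (1 - beta) by apply: Rmult_le_compat_l; lra.
  have : (1 - beta) * (1 - beta) = beta by nra.
  have : (1 - beta) * t < (1 - beta) * (1 - beta) by apply: Rmult_lt_compat_l; lra.
  lra.
have P4 : 0 <= (1 - beta) * t by apply: Rmult_le_pos; lra.
apply: fl_unique; rewrite plus_IZR.
replace ((IZR (2 * I - a) + 3) * beta) with ((IZR (2 * I - a) + 1) * beta + 2 * beta) by ring.
rewrite E1.
have : (1 - beta) * (1 - t) = 1 - beta - (1 - beta) * t by ring.
lra.
Qed.

End R2s.


Definition hw (i : nat) : nat := mw i.+1.

Fixpoint Lp (i : nat) : nat := if i is i'.+1 then Lp i' + 2 - hw i' else 0.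

Lemma hwE i : Z.of_nat (hw i) = (A i.+2 - A i.+1)%Z.
Proof. exact: mwE. Qed.

Lemma hw01 i : hw i = 0 \/ hw i = 1.
Proof. exact: mw01. Qed.

Lemma Lp_Z i : Z.of_nat (Lp i) = (2 * Z.of_nat i - A i.+1)%Z.
Proof.
elim: i => [|i IH]; first by rewrite /= A1.
have -> : Lp i.+1 = Lp i + 2 - hw i by [].
have := hwE i; have := hw01 i; rewrite Nat2Z.inj_succ; lia.
Qed.

Section RealPart.
Local Open Scope R_scope.

Lemma INR_S_Z n : INR n.+1 = IZR (Z.of_nat n) + 1.
Proof. by rewrite S_INR INR_Z. Qed.

Lemma INR1 : INR 1 = 1. Proof. by []. Qed.
Lemma INR2 : INR 2 = 2. Proof. simpl; ring. Qed.
Lemma INR3 : INR 3 = 3. Proof. simpl; ring. Qed.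

Lemma hw_Lp i : (hw (Lp i) = 0)%N /\ ((hw i = 0)%N -> (hw (Lp i).+1 = 1)%N).
Proof.
set I := Z.of_nat i; set a := A i.+1.
have Ha : IZR a < (IZR I + 1) * beta < IZR a + 1.
  have e : INR i.+1 = IZR I + 1 := INR_S_Z i.
  rewrite /a /A -e; split; first exact: frac_pos (ltn0Sn i).
  by have [_ h] := fl_spec (INR i.+1 * beta).
have [k1 [k2 k3]] := key_real Ha.
have EL : forall c, INR ((Lp i) + c)%N = IZR (2 * I - a) + INR c.
  by move=> c; rewrite INR_addn INR_Z Lp_Z.
have e1 : A (Lp i).+1 = (I - a)%Z.
  by rewrite /A -addn1 EL INR1 -k1.
have e2 : A (Lp i).+2 = (I - a)%Z.
  by rewrite /A -addn2 EL INR2 -k2.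
split.
  have := hwE (Lp i); rewrite e1 e2; lia.
move=> h0.
have h3 : (IZR I + 2) * beta < IZR a + 1.
  have [_] := fl_spec (INR i.+2 * beta).
  have E : A i.+2 = a by have := hwE i; rewrite h0; rewrite /a; lia.
  rewrite -/(A i.+2) E.
  have -> : INR i.+2 = IZR I + 2 by rewrite /I !S_INR INR_Z; ring.
  done.
have e3 : A (Lp i).+3 = (I - a + 1)%Z.
  by rewrite /A -addn3 EL INR3 -(k3 h3).
have := hwE (Lp i).+1; rewrite e2 e3; lia.
Qed.

End RealPart.

Definition pre n := mkseq hw n.

Lemma fib_sub_rcons s x : fib_sub (rcons s x) = fib_sub s ++ fib_sub_letter x.
Proof. by rewrite /fib_sub -cats1 map_cat flatten_cat /= cats0. Qed.

Lemma sub_pre i : fib_sub (pre i) = pre (Lp i).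
Proof.
elim: i => [|i IH]; first by [].
rewrite /pre mkseqS fib_sub_rcons -/(pre i) IH /=.
have [h1 h2] := hw_Lp i.
case: (hw01 i) => E; rewrite E.
  by rewrite subn0 addn2 /pre !mkseqS -!cats1 -catA h1 (h2 E).
rewrite addn2 subn1 /= /pre mkseqS -cats1.
by rewrite h1.
Qed.

Fixpoint ell (K : nat) : nat := if K is K'.+1 then Lp (ell K') else 1.

Lemma hw0 : hw 0 = 0.
Proof. have := hwE 0; rewrite A2 A1; lia. Qed.

Lemma iter_pre K : iter K fib_sub [:: 0] = pre (ell K).
Proof.
elim: K => [|K IH]; first by rewrite /pre mkseqS hw0.
by rewrite iterS IH sub_pre.
Qed.

Lemma Lp_ge l : 0 < l -> l < Lp l.
Proof.
elim: l => [|l IH] //= _.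
case: l IH => [|l] IH.
  by rewrite /= hw0.
have := IH isT; have := hw01 l.+1; lia.
Qed.

Lemma ell_ge K : K < ell K.
Proof.
elim: K => [|K IH] //=.
have := @Lp_ge (ell K) (leq_ltn_trans (leq0n K) IH); lia.
Qed.

Lemma fib_wordE n : fib_word n = hw n.
Proof.
rewrite /fib_word iter_pre /pre nth_mkseq //.
have := ell_ge n.+1; lia.
Qed.

Lemma g_wordE n : g_word n = mw n.
Proof.
case: n => [|n]; last by rewrite /g_word fib_wordE.
by rewrite /g_word /mw A1 A0.
Qed.


Lemma pigeon M (f : nat -> nat) : (forall j, j <= M -> f j < M) ->
  exists i j, [/\ i < j, j <= M & f i = f j].
Proof.
move=> Hf.
have Hg : forall k : 'I_M.+1, f k < M by move=> k; apply: Hf; rewrite -ltnS.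
pose g := fun k : 'I_M.+1 => Ordinal (Hg k).
have ni : ~ injective g.
  by move=> inj; have := leq_card g inj; rewrite !card_ord ltnn.
have [a Ha] := not_all_ex_not _ _ ni.
have [b Hb] := not_all_ex_not _ _ Ha.
have [e ne] := imply_to_and _ _ Hb.
have fe : f a = f b by have := congr1 val e.
have ab : (a : nat) != b by apply/negP => /eqP /val_inj.
case: (ltngtP a b) => h; last by move: ab; rewrite h eqxx.
  by exists a, b; split => //; rewrite -ltnS.
by exists b, a; split => //; rewrite -ltnS.
Qed.

Section Bohr.
Local Open Scope R_scope.

Lemma fl_ge0 x : 0 <= x -> (0 <= fl x)%Z.
Proof.
move=> h; have := fl_mono h; have -> : fl 0 = 0%Z by apply: fl_unique; lra.
done.
Qed.

Definition bohr (th eta : R) (n : nat) := exists N : Z, Rabs (INR n * th - IZR N) < eta.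


Lemma ipstar_bohr th eta : 0 < eta -> IPstar (bohr th eta).
Proof.
move=> e0 B [x [xinc HB]].
set M := Z.to_nat (up (1 / eta)).
have [u1 u2] := archimed (1 / eta).
have u0 : 0 < 1 / eta by apply: Rdiv_lt_0_compat; lra.
have M0 : (0 < M)%N.
  rewrite /M; have : (0 < up (1/eta))%Z by apply: lt_IZR; lra. lia.
have MR : INR M = IZR (up (1 / eta)).
  rewrite INR_Z /M Z2Nat.id //; apply: le_IZR; lra.
have Mpos : 0 < INR M by apply: lt_0_INR; apply/ltP.
have Minv : 1 / INR M < eta.
  have h : 1 / eta < INR M by rewrite MR; lra.
  have h2 : 1 < eta * INR M.
    have : eta * (1 / eta) < eta * INR M by apply: Rmult_lt_compat_l.
    have : eta * (1 / eta) = 1 by field; lra.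
    lra.
  apply: (Rmult_lt_reg_r (INR M)) => //.
  have : 1 / INR M * INR M = 1 by field; lra.
  lra.
set S := fun j => (\sum_(i <- iota 0 j) x i)%N.
set fr := fun j => INR (S j) * th - IZR (fl (INR (S j) * th)).
have frb : forall j, 0 <= fr j < 1 by move=> j; rewrite /fr; have := fl_spec (INR (S j) * th); lra.
set bk := fun j => Z.to_nat (fl (fr j * INR M)).
have bkb : forall j, (j <= M)%N -> (bk j < M)%N.
  move=> j _; rewrite /bk.
  have [f1 f2] := fl_spec (fr j * INR M).
  have := frb j => hf.
  have h1 : fr j * INR M < INR M by nra.
  have h2 : 0 <= fr j * INR M by nra.
  have : (fl (fr j * INR M) < Z.of_nat M)%Z by apply: lt_IZR; rewrite -INR_Z; lra.
  have := fl_ge0 h2.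
  lia.
have [i [j [ij jM Eb]]] := pigeon bkb.
have close : Rabs (fr j - fr i) < eta.
  apply: Rle_lt_trans Minv.
  have [a1 a2] := fl_spec (fr i * INR M).
  have [b1 b2] := fl_spec (fr j * INR M).
  have Ez : fl (fr i * INR M) = fl (fr j * INR M).
    move: Eb; rewrite /bk => Eb.
    have : (0 <= fl (fr i * INR M))%Z by apply: fl_ge0; have := frb i; nra.
    have : (0 <= fl (fr j * INR M))%Z by apply: fl_ge0; have := frb j; nra.
    lia.
  rewrite -Ez in b1 b2.
  have H : -1 < (fr j - fr i) * INR M < 1 by split; lra.
  have E : 1 / INR M * INR M = 1 by field; lra.
  apply: Rabs_le; split; apply: (Rmult_le_reg_r (INR M)) => //; lra.
set D := (\sum_(l <- iota i (j - i)) x l)%N.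
have SD : S j = (S i + D)%N.
  rewrite /S /D -big_cat /= -iotaD.
  by congr (\sum_(l <- iota 0 _) _)%N; lia.
exists D; split.
  exists (fl (INR (S j) * th) - fl (INR (S i) * th))%Z.
  rewrite minus_IZR.
  have -> : INR D * th = INR (S j) * th - INR (S i) * th by rewrite SD INR_addn; ring.
  move: close; rewrite /fr.
  by have -> : INR (S j) * th - IZR (fl (INR (S j) * th)) - (INR (S i) * th - IZR (fl (INR (S i) * th))) =
      INR (S j) * th - INR (S i) * th - (IZR (fl (INR (S j) * th)) - IZR (fl (INR (S i) * th))) by ring.
apply: HB; first exact: iota_uniq.
by rewrite -size_eq0 size_iota subn_eq0 -ltnNge.
Qed.

End Bohr.


Lemma sum_pos (F : list nat) : F != [::] -> (0 < \sum_(i <- F) i.+1)%N.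
Proof. by case: F => // a F _; rewrite big_cons addSn. Qed.

Section Dir.
Local Open Scope R_scope.

Lemma dirichlet th eta : 0 < eta -> exists m, (0 < m)%N /\ bohr th eta m.
Proof.
move=> e0.
have IP : IPset (fun n => (0 < n)%N).
  exists (fun i => i.+1); split => // F _ nF; exact: sum_pos.
have [n [h1 h2]] := ipstar_bohr th e0 IP.
by exists n.
Qed.

Definition irr (th : R) := forall m N, (0 < m)%N -> INR m * th <> IZR N.

Lemma div_bounds (y g : R) : 0 < g -> 0 <= y ->
  IZR (fl (y / g)) * g <= y < (IZR (fl (y / g)) + 1) * g.
Proof.
move=> g0 y0; have [h1 h2] := fl_spec (y / g).
have E : y / g * g = y by field; lra.
split; nra.
Qed.

Lemma pos_side th eta : irr th -> 0 < eta <= 1/2 ->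
  exists m, (0 < m)%N /\ exists N, 0 < INR m * th - IZR N < eta.
Proof.
move=> ir [e0 e1].
have [m [m0 [N HN]]] := dirichlet th e0.
have nz : INR m * th - IZR N <> 0 by move=> h; apply: (ir m N m0); lra.
case: (Rlt_le_dec 0 (INR m * th - IZR N)) => hs.
  by exists m; split => //; exists N; split => //; move: HN; rewrite Rabs_right; lra.
set g := IZR N - INR m * th.
have g0 : 0 < g by rewrite /g; lra.
have ge : g < eta by move: HN; rewrite Rabs_left1 /g; lra.
have [k1 k2] := div_bounds g0 Rle_0_1.
set k := fl (1 / g) in k1 k2.
have kge : (1 <= k)%Z.
  have : 0 < IZR k.
    have : 2 * g < 1 by lra.
    nra.
  move/lt_IZR; lia.
exists (Z.to_nat k * m)%N; split; first by rewrite muln_gt0 m0 andbT; lia.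
exists (k * N - 1)%Z.
have Ek : INR (Z.to_nat k) = IZR k by rewrite INR_Z Z2Nat.id //; lia.
have E : INR (Z.to_nat k * m) * th - IZR (k * N - 1) = 1 - IZR k * g.
  rewrite -multE mult_INR Ek minus_IZR mult_IZR /g; ring.
rewrite E.
have : 1 - IZR k * g <> 0.
  rewrite -E => h; apply: (ir (Z.to_nat k * m)%N (k * N - 1)%Z).
    by rewrite muln_gt0 m0 andbT; lia.
  lra.
move=> hne; split.
  by case: (Rle_lt_or_eq_dec _ _ k1) => h; [lra|exfalso; apply: hne; lra].
lra.
Qed.

Definition Dp (th eta : R) (n : nat) := (0 < n)%N /\ exists N, 0 <= INR n * th - IZR N < eta.

Lemma Dp_add th eta m n : Dp th (eta / 2) m -> Dp th (eta / 2) n -> Dp th eta (m + n).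
Proof.
move=> [m0 [M hM]] [n0 [N hN]]; split; first by rewrite addn_gt0 m0.
exists (M + N)%Z; rewrite INR_addn plus_IZR; lra.
Qed.

Lemma Dp_mono th e e' n : e <= e' -> Dp th e n -> Dp th e' n.
Proof. move=> ee [n0 [N hN]]; split => //; exists N; lra. Qed.

Lemma Dp_syndetic th eta : irr th -> 0 < eta <= 1/2 ->
  exists b, forall n, exists j, (j <= b)%N /\ Dp th eta (n + j).
Proof.
move=> ir he.
have [m [m0 [N0 [g0 ge]]]] := pos_side ir he.
set g := INR m * th - IZR N0 in g0 ge.
exists ((Z.to_nat (fl (1 / g)) + 1) * m)%N => n.
have hF := fl_spec (INR n * th).
move: hF; set F := fl (INR n * th) => hF; clearbody F.
set x := INR n * th - IZR F.
have [x0 x1] : 0 <= x < 1 by rewrite /x; lra.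
have hx : 0 <= 1 - x by lra.
have [k1 k2] := div_bounds g0 hx.
have kge : (0 <= fl ((1 - x) / g))%Z by apply: fl_ge0; apply: Rmult_le_pos => //; apply: Rlt_le; apply: Rinv_0_lt_compat.
have kle : (fl ((1 - x) / g) <= fl (1 / g))%Z.
  apply: fl_mono; rewrite /Rdiv; apply: Rmult_le_compat_r; last lra.
  by apply: Rlt_le; apply: Rinv_0_lt_compat.
move: k1 k2 kge kle; set k := fl ((1 - x) / g) => k1 k2 kge kle; clearbody k.
have kle2 : (0 <= fl (1 / g))%Z by lia.
exists ((Z.to_nat k + 1) * m)%N; split.
  by apply: leq_mul => //; lia.
split; first by rewrite addn_gt0 muln_gt0 m0 addn1 orbT.
exists (F + (k + 1) * N0 + 1)%Z.
have Ek : INR (Z.to_nat k + 1) = IZR k + 1 by rewrite INR_addn INR_Z Z2Nat.id // INR1.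
have E : INR (n + (Z.to_nat k + 1) * m) * th - IZR (F + (k + 1) * N0 + 1) =
   x + (IZR k + 1) * g - 1.
  rewrite INR_addn -multE mult_INR Ek !plus_IZR mult_IZR plus_IZR /x /g; ring.
rewrite E; split; nra.
Qed.

End Dir.


Section Main.
Local Open Scope R_scope.

Lemma irr_beta : irr beta.
Proof. move=> m N m0 E; apply: (@beta_irr (Z.of_nat m) N); [lia|by rewrite -INR_Z]. Qed.

Lemma irr_nbeta : irr (- beta).
Proof.
move=> m N m0 E; apply: (@beta_irr (Z.of_nat m) (- N)); first lia.
by rewrite -INR_Z opp_IZR -E; ring.
Qed.

Variable (k : nat) (eps : R).
Hypotheses (e0 : 0 < eps) (e1 : eps <= 1/2)
  (He : forall j, (0 < j)%N -> (j <= k.+1)%N ->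
     eps <= INR j * beta - IZR (A j) /\ eps <= 1 - (INR j * beta - IZR (A j))).

Lemma shiftA n N d j : INR n * beta = IZR N + d -> - eps < d < eps ->
  (0 < j)%N -> (j <= k.+1)%N -> A (n + j) = (N + A j)%Z.
Proof.
move=> E hd j0 jk; have [h1 h2] := He j0 jk.
apply: (A_shift j0 E); lra.
Qed.

Lemma shiftmw n N d j : INR n * beta = IZR N + d -> - eps < d < eps ->
  (0 < j)%N -> (j <= k)%N -> mw (n + j) = mw j.
Proof.
move=> E hd j0 jk.
rewrite /mw -addnS (shiftA E hd j0) ?(ltnW (leq_ltn_trans jk (ltnSn _))) //.
rewrite (shiftA E hd (ltn0Sn j)) //; lia.
Qed.

Let u := word_prefix fib_word k.

Lemma nth_u i : (i < k)%N -> nth 0%N u i = mw i.+1.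
Proof. by move=> ik; rewrite /u /word_prefix nth_mkseq // fib_wordE. Qed.

Lemma bohr_occ : forall n, bohr beta eps n -> occ fib_word u n.
Proof.
move=> n [N HN] i; rewrite /u /word_prefix size_mkseq => ik.
rewrite -/u nth_u // fib_wordE /hw -addnS.
have E : INR n * beta = IZR N + (INR n * beta - IZR N) by ring.
apply: (shiftmw E) => //.
by move/Rabs_def2: HN; lra.
Qed.

Lemma Dp_occ0 : forall n, Dp beta eps n -> occ g_word (0%N :: u) n.
Proof.
move=> n [n0 [N HN]] i; rewrite /= /u /word_prefix size_mkseq -/u => ik.
have E : INR n * beta = IZR N + (INR n * beta - IZR N) by ring.
rewrite g_wordE; case: i ik => [|i] ik /=.
  rewrite addn0 /mw -addn1 (shiftA E _ (ltn0Sn 0)) //; last lra.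
  rewrite (A_shift0p E) ?A1; last lra.
  by rewrite Z.add_0_r Z.sub_diag.
rewrite nth_u // (shiftmw E) //; lra.
Qed.

Lemma Dp_occ1 : forall n, Dp (- beta) eps n -> occ g_word (1%N :: u) n.
Proof.
move=> n [n0 [N HN]] i; rewrite /= /u /word_prefix size_mkseq -/u => ik.
have nz : INR n * - beta - IZR N <> 0.
  move=> h; apply: (irr_nbeta (N := N) n0); lra.
have E : INR n * beta = IZR (- N) + (- (INR n * - beta - IZR N)) by rewrite opp_IZR; ring.
rewrite g_wordE; case: i ik => [|i] ik /=.
  rewrite addn0 /mw -addn1 (shiftA E _ (ltn0Sn 0)) //; last lra.
  rewrite (A_shift0n E) ?A1; last lra.
  lia.
rewrite nth_u // (shiftmw E) //; lra.
Qed.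

Lemma pow2_pos t : 0 < 2 ^ t.
Proof. apply: pow_lt; lra. Qed.


Lemma family_central th (P : nat -> Prop) : irr th -> (forall n, Dp th eps n -> P n) ->
  central P.
Proof.
move=> ir HP.
pose D := fun t n => Dp th (eps / 2 ^ t) n.
have [p [mp Hp]] : exists p, minimal_idempotent p /\ forall t, p (D t).
  apply: central_family.
  - move=> t n; apply: Dp_mono.
    have := pow2_pos t => h.
    rewrite /= /Rdiv; apply: Rmult_le_compat_l; first lra.
    apply: Rinv_le_contravar => //; lra.
  - move=> t m n h1 h2.
    have E : eps / 2 ^ t.+1 = eps / 2 ^ t / 2.
      by rewrite /=; field; apply: Rgt_not_eq; apply: pow2_pos.
    rewrite /D E in h1 h2; exact: Dp_add.
  - move=> t; apply: Dp_syndetic => //.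
    have := pow2_pos t => h.
    have : 1 <= 2 ^ t by apply: pow_R1_Rle; lra.
    split; first by apply: Rdiv_lt_0_compat.
    apply: Rle_trans e1; rewrite /Rdiv; rewrite -[X in _ <= X]Rmult_1_r.
    apply: Rmult_le_compat_l; first lra.
    rewrite -Rinv_1; apply: Rinv_le_contravar; lra.
  - by case.
exists p; split => //.
case: mp => Up _ _ _; apply: (ufM Up _ (Hp 0%N)) => n.
rewrite /D /= Rdiv_1_r; exact: HP.
Qed.

End Main.

Theorem mainTheorem9 :
  forall k : nat, 0 < k ->
    let u := word_prefix fib_word k in
    [/\ IPstar (occ fib_word u) /\ central_star (occ fib_word u),
        IPset (occ g_word (0 :: u)) /\ central (occ g_word (0 :: u)) &
        IPset (occ g_word (1 :: u)) /\ central (occ g_word (1 :: u))].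
Proof.
move=> k _ u.
have [eps [e0 [e1 He]]] := eps_exists k.+1.
have IPs : IPstar (occ fib_word u).
  move=> B HB; have [n [h1 h2]] := ipstar_bohr beta e0 HB.
  by exists n; split => //; apply: (bohr_occ He).
have C0 : central (occ g_word (0 :: u)).
  apply: (family_central e0 e1 irr_beta); exact: (Dp_occ0 e0 e1 He).
have C1 : central (occ g_word (1 :: u)).
  apply: (family_central e0 e1 irr_nbeta); exact: (Dp_occ1 e0 e1 He).
split; split => //.
- exact: IPstar_central_star.
- exact: central_IP.
- exact: central_IP.
Qed.
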